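(* Let $G=(V,E)$ be a graph with $|V|=n$, let $k\ge1$, and suppose $N_1,\dots,N_r$ is an $r$-partition of $G$. Then $$M^G_{k,n}\le \sum_{i=1}^r M^C_{k,|N_i|}+r .$$ In particular, $M^G_{k,n}=O(rk\log(n/k))+r$.
   Context: Let $G=(V,E)$ be a simple undirected graph. A set $S\subseteq V$ is a hub for $U\subseteq V$ if the induced subgraph $G_S$ is connected and every $u\in U$ has a neighbor $s\in S$, i.e. $\{u,s\}\in E$. Pairwise disjoint sets $N_1,\dots,N_r\subseteq V$ form an $r$-partition of $G$ if $\bigcup_{i=1}^r N_i=V$ and, for every $i$, $V\setminus N_i$ is a hub for $N_i$. A measurement matrix for $G$ is a $0$-$1$ matrix with columns indexed by $V$ in which every nonzero row has a support that induces a connected subgraph of $G$. A vector is $k$-sparse if it has at most $k$ nonzero entries. $A$ identifies all $k$-sparse vectors if $Ax_1\ne Ax_2$ for every two distinct $k$-sparse $x_1,x_2\in\mathbb{R}^n$. $M^G_{k,n}$ is the minimum number of rows of a measurement matrix for $G$ that identifies all $k$-sparse vectors. $M^C_{k,N}$ is the minimum number of rows of an arbitrary $0$-$1$ matrix with $N$ columns that identifies all $k$-sparse vectors in $\mathbb{R}^N$; it satisfies $M^C_{k,N}=O(k\log(N/k))$. *)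

(* Defs.v *)
From HB Require Import structures.
From mathcomp Require Import all_boot all_order all_algebra.
Set Implicit Arguments. Unset Strict Implicit. Unset Printing Implicit Defensive.
Import Order.TTheory GRing.Theory Num.Theory.
From Stdlib Require Import ClassicalEpsilon.

Definition asb (P : Prop) : bool :=
  if excluded_middle_informative P then true else false.

Lemma asbP (P : Prop) : reflect P (asb P).
Proof. by rewrite /asb; case: excluded_middle_informative => h; constructor. Qed.

Section Defs.
Variable V : finType.
Variable e : rel V. (* adjacency of a simple undirected graph *)

Definition induced (S : {set V}) : rel V :=
  [rel a b | [&& e a b, a \in S & b \in S]].

Definition connected_set (S : {set V}) : Prop :=
  forall x y, x \in S -> y \in S -> connect (induced S) x y.

Definition hub (S U : {set V}) : Prop :=
  connected_set S /\ forall u, u \in U -> exists2 s, s \in S & e u s.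

Definition r_partition (r : nat) (N : 'I_r -> {set V}) : Prop :=
  [/\ forall i j, i != j -> [disjoint N i & N j],
      \bigcup_(i < r) N i = [set: V] &
      forall i, hub (~: N i) (N i)].
End Defs.

Section Sensing.
Variable R : realFieldType.

(* A 0-1 matrix with m rows and columns indexed by T is given by its
   boolean entries A i t (entry = 1 iff A i t). *)
Definition mx01 (m : nat) (T : finType) := 'I_m -> T -> bool.

Definition mx01_mul (m : nat) (T : finType) (A : mx01 m T) (x : {ffun T -> R})
  : {ffun 'I_m -> R} := [ffun i => (\sum_(t | A i t) x t)%R].

Definition sparse (T : finType) (k : nat) (x : {ffun T -> R}) : bool :=
  #|[set t | x t != 0%R]| <= k.

Definition identifies (m : nat) (T : finType) (A : mx01 m T) (k : nat) : Prop :=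
  forall x1 x2 : {ffun T -> R}, sparse k x1 -> sparse k x2 ->
    x1 != x2 -> mx01_mul A x1 != mx01_mul A x2.

Definition measurement (V : finType) (e : rel V) (m : nat) (A : mx01 m V) : Prop :=
  forall i, [set v | A i v] != set0 -> connected_set e [set v | A i v].

Lemma MC_ex (k N : nat) :
  exists m, exists A : mx01 m 'I_N, identifies A k.
Proof.
exists N, (fun i j => j == i) => x1 x2 _ _ ne; apply: contra ne => /eqP E.
apply/eqP/ffunP => i; move/ffunP: E => /(_ i); rewrite !ffunE.
by rewrite !(big_pred1_eq _ i).
Qed.

Lemma MG_ex (V : finType) (e : rel V) (k : nat) :
  exists m, exists A : mx01 m V, measurement e A /\ identifies A k.
Proof.
exists #|V|, (fun i v => v == enum_val i); split.
  move=> i _ x y; rewrite !inE => /eqP -> /eqP ->; exact: connect0.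
move=> x1 x2 _ _ ne; apply: contra ne => /eqP E.
apply/eqP/ffunP => v; move/ffunP: E => /(_ (enum_rank v)); rewrite !ffunE.
by rewrite !(big_pred1_eq _ (enum_val (enum_rank v))) enum_rankK.
Qed.

Definition MC (k N : nat) : nat :=
  ex_minn (P := fun m => asb (exists A : mx01 m 'I_N, identifies A k))
    (let: ex_intro m h := MC_ex k N in ex_intro _ m (introT (asbP _) h)).

Definition MG (V : finType) (e : rel V) (k : nat) : nat :=
  ex_minn (P := fun m => asb (exists A : mx01 m V, measurement e A /\ identifies A k))
    (let: ex_intro m h := MG_ex e k in ex_intro _ m (introT (asbP _) h)).
End Sensing.

(* Main.v *)
Require Import Defs.
From HB Require Import structures.
From mathcomp Require Import all_boot all_order all_algebra.
From Stdlib Require Import ClassicalEpsilon.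
Set Implicit Arguments. Unset Strict Implicit. Unset Printing Implicit Defensive.
Import Order.TTheory GRing.Theory Num.Theory.

Lemma MC_spec (R : realFieldType) k n :
  exists A : mx01 (MC R k n) 'I_n, identifies R A k.
Proof. by rewrite /MC; case: ex_minnP => m /asbP H _. Qed.

Lemma MG_le (R : realFieldType) (V : finType) (e : rel V) k (T : finType)
  (B : T -> V -> bool) :
  (forall t, connected_set e [set v | B t v]) ->
  (forall x1 x2 : {ffun V -> R}, sparse k x1 -> sparse k x2 ->
     (forall t, \sum_(v | B t v) x1 v = \sum_(v | B t v) x2 v)%R -> x1 = x2) ->
  MG R e k <= #|T|.
Proof.
move=> Hc Hid; rewrite /MG; case: ex_minnP => m _ min; apply: min.
apply/asbP; exists (fun i v => B (enum_val i) v); split.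
  by move=> i _; exact: Hc.
move=> x1 x2 s1 s2 ne; apply/eqP => E; move/eqP: ne; apply; apply: Hid => // t.
move/ffunP: E => /(_ (enum_rank t)); rewrite !ffunE enum_rankK.
by [].
Qed.

Lemma conn_sup (V : finType) (e : rel V) (e_sym : symmetric e)
  (N S : {set V}) : hub e (~: N) N -> ~: N \subset S -> connected_set e S.
Proof.
move=> [hc hn] sub.
have isym : connect_sym (induced e S).
  by apply: sym_connect_sym => a b; rewrite /induced /= e_sym; case: (e b a) => //=; rewrite andbC.
have toC : forall u, u \in S -> exists2 s, s \in ~: N & connect (induced e S) u s.
  move=> u uS; case: (boolP (u \in N)) => uN.
    case: (hn u uN) => s sC eus; exists s => //; apply: connect1.
    by rewrite /induced /= eus uS (subsetP sub s sC).
  by exists u; [rewrite inE | exact: connect0].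
move=> x y xS yS.
case: (toC x xS) => sx sxC cx; case: (toC y yS) => sy syC cy.
apply: connect_trans cx _; rewrite isym; apply: connect_trans cy _; rewrite isym.
apply: (connect_sub _ (hc sx sy sxC syC)) => a b /= /and3P[eab aC bC].
by apply: connect1; rewrite /induced /= eab (subsetP sub a aC) (subsetP sub b bC).
Qed.

Theorem theorem7 (R : realFieldType) (V : finType) (e : rel V)
    (e_sym : symmetric e) (e_irr : irreflexive e)
    (k r : nat) (N : 'I_r -> {set V})
    (hk : 0 < k) (hN : r_partition e N) :
  MG R e k <= \sum_(i < r) MC R k #|N i| + r.
Proof.
move: hN => [_ hcov hhub].
pose M i := MC R k #|N i|.
have HA : forall i, exists A : mx01 (M i) 'I_#|N i|, identifies R A k :=
  fun i => MC_spec R k #|N i|.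
pose A i := proj1_sig (constructive_indefinite_description _ (HA i)).
have Aid : forall i, identifies R (A i) k :=
  fun i => proj2_sig (constructive_indefinite_description _ (HA i)).
pose img i (j : 'I_(M i)) : {set V} := [set enum_val s | s in [set s | A i j s]].
pose B (t : {i : 'I_r & option 'I_(M i)}) (v : V) : bool :=
  match t with
  | existT i None => v \notin N i
  | existT i (Some j) => (v \notin N i) || (v \in img i j) end.
apply: (leq_trans (@MG_le R V e k _ B _ _)); last first.
- rewrite card_tagged sumnE big_map big_enum /=.
  rewrite (eq_bigr (fun i => M i + 1)) => [|i _]; last by rewrite card_option card_ord addn1.
  by rewrite big_split /= sum1_card card_ord.
2: case=> i o; case: o => [j|]; apply: (conn_sup e_sym (hhub i)); apply/subsetP => v;
    by rewrite !inE /= => ->.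
move=> x1 x2 s1 s2 H.
have sp : forall (x : {ffun V -> R}) i, sparse k x ->
    sparse k [ffun s : 'I_#|N i| => x (enum_val s)].
  move=> x i sx; rewrite /sparse; apply: leq_trans sx.
  rewrite -(card_imset _ enum_val_inj); apply: subset_leq_card.
  by apply/subsetP => v /imsetP[s]; rewrite !inE ffunE => nz ->.
have split : forall i j (x : {ffun V -> R}),
   (\sum_(v | B (existT _ i (Some j)) v) x v =
    \sum_(v | B (existT _ i None) v) x v + \sum_(s | A i j s) x (enum_val s))%R.
  move=> i j x.
  rewrite (eq_bigl [predU [pred v | v \notin N i] & [pred v | v \in img i j]]) //.
  rewrite bigU; last first.
    apply/pred0P => v /=; rewrite !inE; case: (boolP (v \in N i)) => //= vN.
    apply/negbTE/imsetP => -[s _ vE]; by move: vN; rewrite vE enum_valP.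
  congr (_ + _)%R; rewrite big_imset /=; last by move=> a b _ _; exact: enum_val_inj.
  by apply: eq_bigl => s; rewrite inE.
have key : forall i, [ffun s : 'I_#|N i| => x1 (enum_val s)] =
                     [ffun s => x2 (enum_val s)].
  move=> i; apply/eqP; apply: contraT => ne.
  move/negP: (Aid i _ _ (sp x1 i s1) (sp x2 i s2) ne) => nE; exfalso; apply: nE.
  apply/eqP/ffunP => j; rewrite !ffunE.
  under eq_bigr do rewrite ffunE. under [in RHS]eq_bigr do rewrite ffunE.
  have := H (existT _ i (Some j)); rewrite !split H.
  by move/addrI.
apply/ffunP => v.
have : v \in \bigcup_(i < r) N i by rewrite hcov inE.
case/bigcupP => i _ vN.
by move/ffunP: (key i) => /(_ (enum_rank_in vN v)); rewrite !ffunE enum_rankK_in.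
Qed.
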